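(* Let $\mathcal T$ be an admissible tree. Then: (i) every inner edge incident to a white-empty vertex is of type $(q_\circ=2:q_\bullet=1)$; (ii) every NHP inner edge $e$, joining a black-occupied vertex $v$ to a white-occupied vertex $w$, is of type $(q_\circ=-1:q_\bullet=4)$, the two other edges at $v$ are inner edges to white-empty vertices, one of the other two edges at $w$ joins $w$ to a black-empty vertex carrying two buds, and the remaining edge at $w$ is either a leaf or an inner edge to a black-empty vertex; (iii) every inner edge joining a black-empty vertex to a white-occupied vertex is of type $(2:1)$ or $(5:-2)$, and in the latter case the black-empty vertex carries two buds and the white-occupied vertex is incident to exactly one NHP inner edge.
   Context: A blossom tree is a plane tree whose inner vertices are black or white, all of degree 3, whose inner edges join black to white inner vertices, and whose degree-one ends are buds (attached to black inner vertices, charge $-1$) or leaves (attached to white inner vertices, charge $+1$), with total charge $3$. Removing an inner edge $e$ splits the tree into two parts; $q_\circ$ (resp. $q_\bullet$) is the total charge of the part containing the white (resp. black) endpoint; $e$ is of type $(q_\circ:q_\bullet)$, and is regular if $q_\circ\ge0$ and $q_\bullet\le1$. Each inner vertex is empty or occupied by a particle; an inner edge is HP if at most one endpoint is occupied, NHP if both are. An admissible tree is such a tree in which every HP inner edge is regular and every NHP inner edge is non-regular. *)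

(* Defs.v *)
From mathcomp Require Import all_boot all_order all_algebra.
Set Implicit Arguments. Unset Strict Implicit. Unset Printing Implicit Defensive.
Import GRing.Theory Num.Theory.
Local Open Scope ring_scope.

Inductive vkind := Black | White | Bud | Leaf.

Definition isBlack (k : vkind) : bool := if k is Black then true else false.
Definition isWhite (k : vkind) : bool := if k is White then true else false.
Definition isBud   (k : vkind) : bool := if k is Bud then true else false.
Definition isLeaf  (k : vkind) : bool := if k is Leaf then true else false.
Definition isInner (k : vkind) : bool := isBlack k || isWhite k.

Definition charge (k : vkind) : int :=
  match k with Bud => -1 | Leaf => 1 | _ => 0 end.

Section Blossom.
Variables (V : finType) (e : rel V) (kind : V -> vkind) (occ : V -> bool).

Definition deg (x : V) : nat := #|[set y | e x y]|.

Definition cut (u w : V) : rel V :=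
  [rel x y | e x y && ~~ ((x == u) && (y == w)) && ~~ ((x == w) && (y == u))].

Definition is_tree : Prop :=
  [/\ symmetric e, irreflexive e,
      (forall x y, connect e x y) &
      (forall x y, e x y -> ~~ connect (cut x y) x y)].

Definition total_charge : int := \sum_(x : V) charge (kind x).

(* A blossom tree (the planar embedding is irrelevant for the statement). *)
Definition blossom_tree : Prop :=
  is_tree /\
  (forall x, isInner (kind x) -> deg x = 3%N) /\
  (forall x, ~~ isInner (kind x) -> deg x = 1%N) /\
  (forall x y, e x y -> isBud (kind x) -> isBlack (kind y)) /\
  (forall x y, e x y -> isLeaf (kind x) -> isWhite (kind y)) /\
  (forall x y, e x y -> isInner (kind x) -> isInner (kind y) ->
     (isBlack (kind x) && isWhite (kind y)) || (isWhite (kind x) && isBlack (kind y))) /\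
  total_charge = 3.

Definition part_charge (x y : V) : int :=
  \sum_(z | connect (cut x y) x z) charge (kind z).

Definition q_white (w b : V) : int := part_charge w b.
Definition q_black (w b : V) : int := part_charge b w.

Definition wb_edge (w b : V) : bool :=
  [&& e w b, isWhite (kind w) & isBlack (kind b)].

Definition regular (w b : V) : Prop := 0 <= q_white w b /\ q_black w b <= 1.

Definition NHP (w b : V) : bool := occ w && occ b.
Definition HP (w b : V) : bool := ~~ NHP w b.

Definition admissible : Prop :=
  blossom_tree /\
  forall w b, wb_edge w b ->
    (HP w b -> regular w b) /\ (NHP w b -> ~ regular w b).

End Blossom.

(* Main.v *)
Require Import Defs.
From mathcomp Require Import all_boot all_order all_algebra.
Import GRing.Theory Num.Theory.
Local Open Scope ring_scope.
From mathcomp Require Import zify.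


Section G.
Variables (V : finType) (e : rel V).
Hypotheses (esym : symmetric e) (eirr : irreflexive e)
  (econ : forall x y, connect e x y)
  (ebr : forall x y, e x y -> ~~ connect (cut e x y) x y).

Lemma cutC x y : cut e x y =2 cut e y x.
Proof.
move=> s t; rewrite /cut /=.
by case: (e s t); case: (s == x); case: (t == y); case: (s == y); case: (t == x).
Qed.

Lemma cut_sym x y : symmetric (cut e x y).
Proof.
move=> s t; rewrite /cut /= esym.
by case: (e t s); case: (s == x); case: (t == y); case: (s == y); case: (t == x).
Qed.

Lemma cut_x x a b s t : s != x -> t != x -> (x == a) || (x == b) ->
  cut e a b s t = e s t.
Proof.
move=> sx tx /orP[] /eqP <-; rewrite /cut /=; rewrite (negbTE sx) (negbTE tx) /= ?andbF /= !andbT //.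
Qed.

Lemma path_swap x a b c d u p : all (predC1 x) (u :: p) ->
  (x == a) || (x == b) -> (x == c) || (x == d) ->
  path (cut e a b) u p -> path (cut e c d) u p.
Proof.
move=> Hall hab hcd; apply: (sub_in_path _ Hall) => s t /= sx tx.
by rewrite (@cut_x x) // (@cut_x x).
Qed.

Lemma avoid {a x p} : e a x -> path (cut e a x) a p -> all (predC1 x) (a :: p).
Proof.
move=> eax pth; apply/allP => s Hs /=; apply/negP => /eqP sx; subst s.
by move: (ebr _ _ eax); rewrite (path_connect pth Hs).
Qed.

Lemma part {x y} t : e x y -> connect (cut e x y) x t || connect (cut e x y) y t.
Proof.
move=> exy; have /connectP[p pth ->] := econ x t.
suff H : forall u q, path e u q -> connect (cut e x y) x u || connect (cut e x y) y u ->
  connect (cut e x y) x (last u q) || connect (cut e x y) y (last u q).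
  by apply: H pth _; rewrite connect0.
move=> u q; elim: q u => [|v q IH] u //= /andP[euv pq] Hu; apply: IH => //.
case cuv: (cut e x y u v).
  by case/orP: Hu => H; apply/orP; [left|right]; apply: connect_trans H (connect1 cuv).
move: cuv; rewrite /cut /= euv /= => /negbT; rewrite negb_and !negbK.
by case/orP => /andP[_ /eqP ->]; rewrite connect0 ?orbT.
Qed.

Lemma disj {x y t} : e x y -> connect (cut e x y) x t -> connect (cut e x y) y t -> False.
Proof.
move=> exy c1 c2.
have cs : connect_sym (cut e x y) by apply: sym_connect_sym; apply: cut_sym.
move: (ebr _ _ exy); rewrite (connect_trans c1 _) //; by rewrite cs.
Qed.

Lemma compL {x y z t} : e x y -> e x z -> z != y -> connect (cut e z x) z t ->
  connect (cut e x y) x t /\ t != x.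
Proof.
move=> exy exz zy /connectP[p pth ->].
have ezx : e z x by rewrite esym.
have Hall := avoid ezx pth.
split; last first.
  by move: Hall => /allP /(_ (last z p)); rewrite mem_last => /(_ isT).
apply: (connect_trans (y := z)).
  apply: connect1; rewrite /cut /= exz /= eqxx /= (negbTE zy) /=.
  by apply/negP => /andP[/eqP xy _]; subst y; rewrite eirr in exy.
apply/connectP; exists p => //.
by apply: (@path_swap x z x x y z p Hall _ _ pth); rewrite eqxx ?orbT.
Qed.

Lemma compR {x y t} : connect (cut e x y) x t -> t != x ->
  exists2 z, e x z && (z != y) & connect (cut e z x) z t.
Proof.
move=> /connectP[p pth ->]; case/shortenP: pth => p' pth uq _.
case: p' pth uq => [|z q] //=; first by rewrite eqxx.
move=> /andP[cxz pth] /andP[xn _] _.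
move: cxz; rewrite /cut /= eqxx /= => /andP[/andP[exz zy] _].
exists z; first by rewrite exz zy.
apply/connectP; exists q => //.
have Hall : all (predC1 x) (z :: q).
  apply/allP => s Hs /=; apply/negP => /eqP sx; subst s.
  by rewrite Hs in xn.
by apply: (@path_swap x x y z x z q Hall _ _ pth); rewrite eqxx ?orbT.
Qed.

Lemma comp_uniq {x z1 z2 t} : e x z1 -> e x z2 ->
  connect (cut e z1 x) z1 t -> connect (cut e z2 x) z2 t -> z1 = z2.
Proof.
move=> e1 e2 c1 /connectP[p pth tl].
apply/eqP; apply/negP => /negP n12.
have ez2 : e z2 x by rewrite esym.
have Hall := avoid ez2 pth.
have c2 : connect (cut e z1 x) z2 t.
  apply/connectP; exists p => //.
  by apply: (@path_swap x z2 x z1 x z2 p Hall _ _ pth); rewrite eqxx ?orbT.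
have cs : connect_sym (cut e z1 x) by apply: sym_connect_sym; apply: cut_sym.
have z2x : z2 != x by apply/negP => /eqP h; subst z2; rewrite eirr in e2.
have c3 : cut e z1 x z2 x.
  rewrite /cut /= ez2 /= (negbTE z2x) /= andbT; apply/negP => /andP[/eqP h _]; by rewrite h eqxx in n12.
have ez1 : e z1 x by rewrite esym.
move: (ebr _ _ ez1).
by rewrite (connect_trans c1 (connect_trans (y := z2) _ (connect1 c3))) // cs.
Qed.

Lemma decompF (F : V -> int) x y : e x y ->
  \sum_(t | connect (cut e x y) x t) F t =
  F x + \sum_(z | e x z && (z != y)) \sum_(t | connect (cut e z x) z t) F t.
Proof.
move=> exy.
rewrite (bigD1 x) ?connect0 //=; congr (_ + _).
pose f t := odflt x [pick z | e x z && (z != y) && connect (cut e z x) z t].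
rewrite (partition_big f (fun z => e x z && (z != y))) /=; last first.
  move=> t /andP[ct tx]; rewrite /f; case: pickP => [z /andP[] //|none].
  by case: (compR ct tx) => z H1 H2; move: (none z); rewrite H1 H2.
apply: eq_bigr => z /andP[exz zy]; apply: eq_bigl => t.
apply/idP/idP.
  move=> /andP[/andP[ct tx] /eqP]; rewrite /f; case: pickP => [z' /andP[_ H] /= <- //|none].
  by case: (compR ct tx) => z'' H1 H2; move: (none z''); rewrite H1 H2.
move=> ct; case: (compL exy exz zy ct) => -> -> /=.
rewrite /f; case: pickP => [z' /andP[/andP[exz' _] H] /=|none].
  by rewrite (comp_uniq exz' exz H ct).
by move: (none z); rewrite exz zy ct.
Qed.

Lemma totalF (F : V -> int) x y : e x y ->
  \sum_t F t = \sum_(t | connect (cut e x y) x t) F t + \sum_(t | connect (cut e y x) y t) F t.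
Proof.
move=> exy; rewrite (bigID (fun t => connect (cut e x y) x t)) /=; congr (_ + _).
apply: eq_bigl => t; rewrite -(eq_connect (cutC x y)).
apply/idP/idP => [H|H].
  by case/orP: (part t exy) => // H'; rewrite H' in H.
by apply/negP => H'; apply: (disj exy H' H).
Qed.

Lemma card_lt x y z : e x y -> e x z -> z != y ->
  (#|[set t | connect (cut e z x) z t]| < #|[set t | connect (cut e x y) x t]|)%N.
Proof.
move=> exy exz zy; apply: proper_card; apply/properP; split.
  by apply/subsetP => t; rewrite !inE => /(compL exy exz zy) [].
exists x; rewrite !inE ?connect0 //.
by apply: ebr; rewrite esym.
Qed.

End G.


Definition cm3 (k : vkind) : int :=
  match k with Black => 1 | White => 2 | Bud => -1 | Leaf => 1 end.

Section B.
Variables (V : finType) (e : rel V) (kind : V -> vkind) (occ : V -> bool).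
Hypotheses (esym : symmetric e) (eirr : irreflexive e)
  (econ : forall x y, connect e x y)
  (ebr : forall x y, e x y -> ~~ connect (cut e x y) x y)
  (deg3 : forall x, isInner (kind x) -> deg e x = 3%N)
  (deg1 : forall x, ~~ isInner (kind x) -> deg e x = 1%N)
  (budB : forall x y, e x y -> isBud (kind x) -> isBlack (kind y))
  (leafW : forall x y, e x y -> isLeaf (kind x) -> isWhite (kind y))
  (bw : forall x y, e x y -> isInner (kind x) -> isInner (kind y) ->
     (isBlack (kind x) && isWhite (kind y)) || (isWhite (kind x) && isBlack (kind y)))
  (tot : total_charge kind = 3)
  (reg : forall w b, wb_edge e kind w b ->
    (HP occ w b -> regular e kind w b) /\ (NHP occ w b -> ~ regular e kind w b)).

Local Notation pc := (part_charge e kind).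

Lemma pc_dec {x y} : e x y ->
  pc x y = charge (kind x) + \sum_(z | e x z && (z != y)) pc z x.
Proof. move=> exy; rewrite /part_charge (decompF _ _ esym eirr ebr (fun t => charge (kind t)) _ _ exy) //. Qed.

Lemma pc_sum {x y} : e x y -> pc x y + pc y x = 3.
Proof.
move=> exy; rewrite -tot /total_charge (totalF _ _ esym econ ebr (fun t => charge (kind t)) _ _ exy).
by [].
Qed.

Lemma nb3 {x y} : isInner (kind x) -> e x y ->
  exists z1 z2, z1 != z2 /\ z1 != y /\ z2 != y /\ e x z1 /\ e x z2 /\
    (forall z, e x z -> [|| z == y, z == z1 | z == z2]) /\
    pc x y = charge (kind x) + pc z1 x + pc z2 x.
Proof.
move=> Hi exy; have := deg3 _ Hi; rewrite /deg (cardsD1 y) inE exy add1n => -[].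
move=> /eqP /cards2P [z1 [z2 [neq Sdef]]].
have mem z : (z \in [set z1; z2]) = (z != y) && e x z by rewrite -Sdef !inE.
have h1 : z1 \in [set z1; z2] by rewrite !inE eqxx.
have h2 : z2 \in [set z1; z2] by rewrite !inE eqxx orbT.
rewrite mem in h1; rewrite mem in h2.
case/andP: h1 => n1 e1; case/andP: h2 => n2 e2.
exists z1, z2; do 5!split => //; split.
  move=> z ez; case: (eqVneq z y) => //= zy.
  have : z \in [set z1; z2] by rewrite mem zy ez.
  by rewrite !inE.
rewrite pc_dec // -addrA; congr (_ + _).
rewrite (eq_bigl (fun z => z \in [set z1; z2])); last first.
  by move=> z; rewrite mem andbC.
rewrite big_setU1 /= ?big_set1 // inE //.
Qed.

Lemma nb1 {x y} : ~~ isInner (kind x) -> e x y ->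
  (forall z, e x z -> z = y) /\ pc x y = charge (kind x).
Proof.
move=> Hi exy; have := deg1 _ Hi; rewrite /deg (cardsD1 y) inE exy add1n => -[].
move=> /eqP; rewrite cards_eq0 => /eqP S0.
have mem z : (z != y) && e x z = false.
  by apply/negbTE; apply/negP => H; move: (in_set0 z); rewrite -S0 !inE H.
split.
  move=> z ez; apply/eqP; apply/negPn; by rewrite -[_ != _]andbT -ez mem.
rewrite pc_dec // big_pred0 ?addr0 // => z; by rewrite andbC mem.
Qed.

Lemma nbB {x z} : isBlack (kind x) -> e x z -> isWhite (kind z) || isBud (kind z).
Proof.
move=> Hb exz; case Hx: (kind x) Hb => // _; case Hz: (kind z) => //.
  by have := bw _ _ exz; rewrite Hx Hz /= => /(_ isT isT).
by have := leafW z x; rewrite esym exz Hz Hx => /(_ isT isT).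
Qed.

Lemma nbW {x z} : isWhite (kind x) -> e x z -> isBlack (kind z) || isLeaf (kind z).
Proof.
move=> Hb exz; case Hx: (kind x) Hb => // _; case Hz: (kind z) => //.
  by have := bw _ _ exz; rewrite Hx Hz /= => /(_ isT isT).
by have := budB z x; rewrite esym exz Hz Hx => /(_ isT isT).
Qed.

Lemma pc_mod {x y} : e x y -> ((pc x y - cm3 (kind x)) %% 3)%Z = 0.
Proof.
suff H : forall n x y, (#|[set t | connect (cut e x y) x t]| <= n)%N -> e x y ->
    ((pc x y - cm3 (kind x)) %% 3)%Z = 0.
  by move=> exy; apply: (H _ x y (leqnn _)).
elim=> [|n IH] {}x {}y Hn exy.
  have : x \in [set t | connect (cut e x y) x t] by rewrite inE connect0.
  by move: Hn; rewrite leqn0 cards_eq0 => /eqP ->; rewrite inE.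
case Hi: (isInner (kind x)).
  have [z1 [z2 [n12 [n1 [n2 [e1 [e2 [_ ->]]]]]]]] := nb3 Hi exy.
  have h1 : ((pc z1 x - cm3 (kind z1)) %% 3)%Z = 0.
    apply: IH; last by rewrite esym.
    by rewrite -ltnS; apply: leq_trans (card_lt _ _ esym eirr ebr _ _ _ exy e1 n1) Hn.
  have h2 : ((pc z2 x - cm3 (kind z2)) %% 3)%Z = 0.
    apply: IH; last by rewrite esym.
    by rewrite -ltnS; apply: leq_trans (card_lt _ _ esym eirr ebr _ _ _ exy e2 n2) Hn.
  case Hx: (kind x) Hi => // _.
    have hb : isBlack (kind x) by rewrite Hx.
    move: (nbB hb e1) (nbB hb e2) h1 h2; rewrite /=.
    by case: (kind z1); case: (kind z2) => //= _ _; lia.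
  have hb : isWhite (kind x) by rewrite Hx.
  move: (nbW hb e1) (nbW hb e2) h1 h2; rewrite /=.
  by case: (kind z1); case: (kind z2) => //= _ _; lia.
rewrite (nb1 (negbT Hi) exy).2; case: (kind x) Hi => //= _; lia.
Qed.

Lemma regP {w b} : wb_edge e kind w b -> HP occ w b -> 2 <= pc w b /\ pc b w <= 1.
Proof.
move=> H hp; have [r1 r2] := (reg _ _ H).1 hp.
have := H; case/and3P => ewb _ _; have := pc_sum ewb.
rewrite /q_white /q_black in r1 r2; lia.
Qed.

Lemma nregP {w b} : wb_edge e kind w b -> NHP occ w b -> pc w b <= -1 /\ 4 <= pc b w.
Proof.
move=> H hp; have nr := (reg _ _ H).2 hp.
have := H; case/and3P => ewb Ww _; have := pc_sum ewb.
have := pc_mod ewb; case: (kind w) Ww => // _ /=.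
case: (lerP 2 (pc w b)) => h2.
  move=> _ hs; exfalso; apply: nr; rewrite /regular /q_white /q_black; split.
  all: lia.
Qed.

Lemma nbW' {w z} : isWhite (kind w) -> e w z ->
  (isLeaf (kind z) /\ pc z w = 1) \/ wb_edge e kind w z.
Proof.
move=> Ww ewz; case/orP: (nbW Ww ewz) => h.
  by right; rewrite /wb_edge ewz Ww h.
left; split => //.
have ezw : e z w by rewrite esym.
have ni : ~~ isInner (kind z) by case: (kind z) h.
by rewrite (nb1 ni ezw).2; case: (kind z) h.
Qed.

Lemma nbB' {b z} : isBlack (kind b) -> e b z ->
  (isBud (kind z) /\ pc z b = -1) \/ wb_edge e kind z b.
Proof.
move=> Bb ebz; case/orP: (nbB Bb ebz) => h.
  by right; rewrite /wb_edge esym ebz Bb h.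
left; split => //.
have ezb : e z b by rewrite esym.
have ni : ~~ isInner (kind z) by case: (kind z) h.
by rewrite (nb1 ni ezb).2; case: (kind z) h.
Qed.

Lemma Li {w b} : wb_edge e kind w b -> ~~ occ w -> pc w b = 2 /\ pc b w = 1.
Proof.
move=> H ow; have := H; case/and3P => ewb Ww Bb.
have hp y : HP occ w y by rewrite /HP /NHP (negbTE ow).
have [r1 r2] := regP H (hp b).
have Wi : isInner (kind w) by rewrite /isInner Ww orbT.
have [z1 [z2 [_ [_ [_ [e1 [e2 [_ E]]]]]]]] := nb3 Wi ewb.
have c z : e w z -> pc z w <= 1.
  move=> ez; case: (nbW' Ww ez) => [[_ ->] //| Hz].
  exact: (regP Hz (hp z)).2.
have cw : charge (kind w) = 0 by case: (kind w) Ww.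
have := c _ e1; have := c _ e2; have := pc_sum ewb; lia.
Qed.

Lemma EB {w b} : wb_edge e kind w b -> ~~ occ b ->
  pc b w = 1 \/ (pc b w = -2 /\ forall y, e b y -> y != w -> isBud (kind y)).
Proof.
move=> H ob; have := H; case/and3P => ewb Ww Bb.
have hp y : HP occ y b by rewrite /HP /NHP (negbTE ob) andbF.
have [r1 r2] := regP H (hp w).
have Bi : isInner (kind b) by rewrite /isInner Bb.
have ebw : e b w by rewrite esym.
have [z1 [z2 [_ [_ [_ [e1 [e2 [all E]]]]]]]] := nb3 Bi ebw.
have cb : charge (kind b) = 0 by case: (kind b) Bb.
case: (nbB' Bb e1) => [[bud1 p1]|w1]; case: (nbB' Bb e2) => [[bud2 p2]|w2].
- right; split; first lia.
  move=> y ey yw; case/or3P: (all y ey) => /eqP ?; subst y => //.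
  by rewrite eqxx in yw.
- by left; have := (regP w2 (hp z2)).1; lia.
- by left; have := (regP w1 (hp z1)).1; lia.
- by exfalso; have := (regP w2 (hp z2)).1; have := (regP w1 (hp z1)).1; lia.
Qed.

Lemma Lv {w v} : wb_edge e kind w v -> occ w -> occ v ->
  pc v w = 4 /\ pc w v = -1 /\ forall x, e v x -> x != w -> isWhite (kind x) && ~~ occ x.
Proof.
move=> H ow ov; have := H; case/and3P => ewv Ww Bv.
have hn : NHP occ w v by rewrite /NHP ow ov.
have [r1 r2] := nregP H hn.
have Bi : isInner (kind v) by rewrite /isInner Bv.
have evw : e v w by rewrite esym.
have [z1 [z2 [_ [_ [_ [e1 [e2 [all E]]]]]]]] := nb3 Bi evw.
have cb : charge (kind v) = 0 by case: (kind v) Bv.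
have c z : e v z -> pc z v <= -1 \/ (isWhite (kind z) && ~~ occ z /\ pc z v = 2).
  move=> ez; case: (nbB' Bv ez) => [[_ p]|wz]; first by left; rewrite p.
  case oz: (occ z).
    have hn2 : NHP occ z v by rewrite /NHP oz ov.
    by left; exact: (nregP wz hn2).1.
  right; split; last exact: (Li wz (negbT oz)).1.
  by case/and3P: wz => _ -> _.
have := pc_sum ewv => hs; move: (all) => _; clear H hn.
case: (c _ e1) => [h1|[k1 h1]]; first by exfalso; case: (c _ e2) => [h2|[_ h2]]; (timeout 10 lia).
case: (c _ e2) => [h2|[k2 h2]]; first by exfalso; clear -h1 h2 E cb r2; (timeout 10 lia).
have h4 : pc v w = 4 by clear -h1 h2 E cb r2; lia.
split => //; split; first by clear -h4 hs; lia.
move=> x ex xw; case/or3P: (all x ex) => /eqP ?; subst x => //.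
by rewrite eqxx in xw.
Qed.

Lemma Wocc {w z} : isWhite (kind w) -> occ w -> e w z ->
  (isLeaf (kind z) /\ pc z w = 1) \/ (isBlack (kind z) /\ occ z /\ pc z w = 4) \/
  (isBlack (kind z) /\ ~~ occ z /\
    (pc z w = 1 \/ (pc z w = -2 /\ forall y, e z y -> y != w -> isBud (kind y)))).
Proof.
move=> Ww ow ez; case: (nbW' Ww ez) => [h|wz]; first by left.
right; have Bz : isBlack (kind z) by case/and3P: wz.
case oz: (occ z).
  by left; split => //; split => //; exact: (Lv wz ow oz).1.
by right; split => //; split => //; exact: (EB wz (negbT oz)).
Qed.

Lemma card1 {w b z z'} : (forall y, e w y -> [|| y == b, y == z | y == z']) ->
  ~~ occ b -> wb_edge e kind w z -> occ w -> occ z -> ~~ (isBlack (kind z') && occ z') ->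
  #|[set y | wb_edge e kind w y && NHP occ w y]| = 1%N.
Proof.
move=> all ob wz ow oz nz'.
rewrite (_ : [set y | _] = [set z]) ?cards1 //; apply/setP => y; rewrite !inE.
apply/idP/idP.
  case/andP => /and3P[ey _ By] /andP[_ oy].
  case/or3P: (all y ey) => /eqP ?; subst y => //.
    by rewrite oy in ob.
  by rewrite By oy in nz'.
by move=> /eqP ->; rewrite wz /NHP ow oz.
Qed.

Lemma main_sec :
  (forall w b, wb_edge e kind w b -> ~~ occ w ->
     q_white e kind w b = 2 /\ q_black e kind w b = 1) /\
  (forall w v, wb_edge e kind w v -> occ v -> occ w ->
     q_white e kind w v = -1 /\ q_black e kind w v = 4 /\
     (forall x, e v x -> x != w -> isWhite (kind x) && ~~ occ x) /\
     exists b1 x,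
       b1 != v /\ x != v /\ x != b1 /\ e w b1 /\ e w x /\
       (isBlack (kind b1) && ~~ occ b1 /\
        forall y, e b1 y -> y != w -> isBud (kind y)) /\
       (isLeaf (kind x) || (isBlack (kind x) && ~~ occ x))) /\
  (forall w b, wb_edge e kind w b -> ~~ occ b -> occ w ->
     (q_white e kind w b = 2 /\ q_black e kind w b = 1) \/
     (q_white e kind w b = 5 /\ q_black e kind w b = -2 /\
      (forall y, e b y -> y != w -> isBud (kind y)) /\
      #|[set y | wb_edge e kind w y && NHP occ w y]| = 1%N)).
Proof.
rewrite /q_white /q_black; split; first by move=> w b H ow; exact: Li H ow.
split.
  move=> w v H ov ow.
  have [h1 [h2 h3]] := Lv H ow ov.
  split => //; split => //; split => //.
  have := H; case/and3P => ewv Ww Bv.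
  have Wi : isInner (kind w) by rewrite /isInner Ww orbT.
  have [z1 [z2 [n12 [n1 [n2 [e1 [e2 [_ E]]]]]]]] := nb3 Wi ewv.
  have cw : charge (kind w) = 0 by case: (kind w) Ww.
  have S : pc z1 w + pc z2 w = -1 by clear -E cw h2; lia.
  case: (Wocc Ww ow e1) => [[L1 p1]|[[B1 [O1 p1]]|[B1 [E1 [p1|[p1 bu1]]]]]];
  case: (Wocc Ww ow e2) => [[L2 p2]|[[B2 [O2 p2]]|[B2 [E2 [p2|[p2 bu2]]]]]];
  try (exfalso; clear -S p1 p2; lia).
  - exists z2, z1; do 5!(split => //); split; first by rewrite B2 E2.
    by rewrite L1.
  - exists z2, z1; do 5!(split => //); split; first by rewrite B2 E2.
    by rewrite B1 E1 orbT.
  - exists z1, z2; do 2!(split => //); split; first by rewrite eq_sym.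
    do 2!(split => //); split; first by rewrite B1 E1.
    by rewrite L2.
  - exists z1, z2; do 2!(split => //); split; first by rewrite eq_sym.
    do 2!(split => //); split; first by rewrite B1 E1.
    by rewrite B2 E2 orbT.
move=> w b H ob ow.
have := H; case/and3P => ewb Ww Bb.
have hs := pc_sum ewb.
case: (EB H ob) => [p|[p bu]].
  by left; split => //; clear -p hs; lia.
right; have h5 : pc w b = 5 by clear -p hs; lia.
split => //; split => //; split => //.
have Wi : isInner (kind w) by rewrite /isInner Ww orbT.
have [z1 [z2 [n12 [n1 [n2 [e1 [e2 [all E]]]]]]]] := nb3 Wi ewb.
have all' : forall y, e w y -> [|| y == b, y == z2 | y == z1].
  by move=> y ey; have := all y ey; case: (y == b); case: (y == z1); case: (y == z2).
have cw : charge (kind w) = 0 by case: (kind w) Ww.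
have S : pc z1 w + pc z2 w = 5 by clear -E cw h5; lia.
case: (Wocc Ww ow e1) => [[L1 p1]|[[B1 [O1 p1]]|[B1 [E1 [p1|[p1 bu1]]]]]];
case: (Wocc Ww ow e2) => [[L2 p2]|[[B2 [O2 p2]]|[B2 [E2 [p2|[p2 bu2]]]]]];
try (exfalso; clear -S p1 p2; lia).
- apply: (card1 all' ob _ ow O2); first by rewrite /wb_edge e2 Ww B2.
  by move: L1; case: (kind z1).
- apply: (card1 all ob _ ow O1); first by rewrite /wb_edge e1 Ww B1.
  by move: L2; case: (kind z2).
- apply: (card1 all ob _ ow O1); first by rewrite /wb_edge e1 Ww B1.
  by rewrite (negbTE E2) andbF.
- apply: (card1 all' ob _ ow O2); first by rewrite /wb_edge e2 Ww B2.
  by rewrite (negbTE E1) andbF.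
Qed.

End B.

Theorem mainTheorem3 (V : finType) (e : rel V) (kind : V -> vkind) (occ : V -> bool) :
  admissible e kind occ ->
  (* (i) every inner edge at a white-empty vertex is of type (2:1) *)
  (forall w b, wb_edge e kind w b -> ~~ occ w ->
     q_white e kind w b = 2 /\ q_black e kind w b = 1) /\
  (* (ii) NHP edges: white-occupied w, black-occupied v *)
  (forall w v, wb_edge e kind w v -> occ v -> occ w ->
     q_white e kind w v = -1 /\ q_black e kind w v = 4 /\
     (forall x, e v x -> x != w -> isWhite (kind x) && ~~ occ x) /\
     exists b1 x,
       b1 != v /\ x != v /\ x != b1 /\ e w b1 /\ e w x /\
       (isBlack (kind b1) && ~~ occ b1 /\
        forall y, e b1 y -> y != w -> isBud (kind y)) /\
       (isLeaf (kind x) || (isBlack (kind x) && ~~ occ x))) /\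
  (* (iii) edges joining black-empty b to white-occupied w *)
  (forall w b, wb_edge e kind w b -> ~~ occ b -> occ w ->
     (q_white e kind w b = 2 /\ q_black e kind w b = 1) \/
     (q_white e kind w b = 5 /\ q_black e kind w b = -2 /\
      (forall y, e b y -> y != w -> isBud (kind y)) /\
      #|[set y | wb_edge e kind w y && NHP occ w y]| = 1%N)).
Proof.
move=> [[[esym eirr econ ebr] [deg3 [deg1 [budB [leafW [bw tot]]]]]] reg].
by apply: main_sec.
Qed.
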